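(* Suppose $\|x_s\|_2\le L$ for all arms ever played and $\lambda>0$. Then at every communication round at time $t\le T$, for every client $i$ and every participant set $S$, the data incentive satisfies $$\mathcal I^d_{i,t}(S)\le \min\Big\{\big(1+\tfrac{L^2}{\lambda}\big)^{T},\ \big(1+\tfrac{TL^2}{\lambda d}\big)^{d}\Big\}.$$ Consequently, under the payment-free incentive mechanism, a client $i$ with $D_i^p>\min\{(1+L^2/\lambda)^T,(1+TL^2/(\lambda d))^d\}$ never participates in data sharing.
   Context: Federated linear bandit with $N$ clients and a server; at each time $t\le T$ one client plays an arm $x_t\in\mathbb R^d$ with $\|x_t\|_2\le L$. Client $i$ holds $V_{i,t}=\lambda I+\sum x_sx_s^\top$ over the data available to it; $\Delta V_{j,t}$ denotes client $j$'s local data (sum of $x_sx_s^\top$) not yet uploaded to the server, and $\Delta V_{-i,t}$ the data held by the server (uploaded by other clients) not yet sent to client $i$; all these sums are over distinct time steps $s\le t$, disjoint from those in $V_{i,t}$. For a participant set $S$, the data incentive is $\mathcal I^d_{i,t}(S)=\frac{\det(D_{i,t}(S)+V_{i,t})}{\det V_{i,t}}-1$ with $D_{i,t}(S)=\sum_{j\in S,\,j\ne i}\Delta V_{j,t}+\Delta V_{-i,t}$. Client $i$ participates only if its incentive is at least its data-sharing cost $D_i^p$. The payment-free mechanism offers only the data incentive: starting from all clients it repeatedly removes any client $i\in S$ with $\mathcal I^d_{i,t}(S)<D_i^p$ until stable. *)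

(* Defs.v *)
From HB Require Import structures.
From mathcomp Require Import all_boot all_order all_algebra.
Set Implicit Arguments. Unset Strict Implicit. Unset Printing Implicit Defensive.
Import Order.TTheory GRing.Theory Num.Theory.
Local Open Scope ring_scope.

Section FedBandit.
Variables (R : rcfType) (d T N : nat).

Definition norm2 (v : 'cV[R]_d) : R := Num.sqrt (\sum_(k < d) v k 0 ^+ 2).

(* Time steps 1..T are indexed by s : 'I_T (s stands for time s+1);
   x s is the arm played at that time step. *)
Definition gram (x : 'I_T -> 'cV[R]_d) (A : {set 'I_T}) : 'M[R]_d :=
  \sum_(s in A) (x s *m (x s)^T).

Definition Vmat (x : 'I_T -> 'cV[R]_d) (lam : R)
  (avail : 'I_N -> nat -> {set 'I_T}) (i : 'I_N) (t : nat) : 'M[R]_d :=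
  lam%:M + gram x (avail i t).

(* D_{i,t}(S) = sum_{j in S, j <> i} DeltaV_{j,t} + DeltaV_{-i,t} *)
Definition Dmat (x : 'I_T -> 'cV[R]_d)
  (local server : 'I_N -> nat -> {set 'I_T})
  (i : 'I_N) (t : nat) (S : {set 'I_N}) : 'M[R]_d :=
  \sum_(j in S | j != i) gram x (local j t) + gram x (server i t).

Definition data_incentive (x : 'I_T -> 'cV[R]_d) (lam : R)
  (avail local server : 'I_N -> nat -> {set 'I_T})
  (i : 'I_N) (t : nat) (S : {set 'I_N}) : R :=
  \det (Dmat x local server i t S + Vmat x lam avail i t)
    / \det (Vmat x lam avail i t) - 1.

(* Standing assumptions on the data bookkeeping at time t:
   all sums range over time steps s <= t (i.e. s+1 <= t), the sets of time
   steps in DeltaV_{j,t} (j <> i), DeltaV_{-i,t} and V_{i,t} are pairwise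
   disjoint. *)
Definition data_wf (avail local server : 'I_N -> nat -> {set 'I_T})
  (t : nat) : Prop :=
  forall i : 'I_N,
  [/\ (forall s : 'I_T, s \in avail i t -> (s < t)%N),
      (forall s : 'I_T, s \in server i t -> (s < t)%N)
    & (forall (j : 'I_N) (s : 'I_T), s \in local j t -> (s < t)%N) ] /\
  [/\ [disjoint avail i t & server i t],
      (forall j : 'I_N, j != i ->
         [disjoint avail i t & local j t] /\ [disjoint server i t & local j t])
    & (forall j k : 'I_N, j != i -> k != i -> j != k ->
         [disjoint local j t & local k t])].

End FedBandit.

(* Payment-free mechanism: starting from all clients, repeatedly remove any
   client i in S with incentive inc i S < cost i, until stable. *)
Inductive pf_reach (R : rcfType) (N : nat)
  (inc : 'I_N -> {set 'I_N} -> R) (cost : 'I_N -> R) : {set 'I_N} -> Prop :=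
| pf_start : pf_reach inc cost [set: 'I_N]
| pf_remove (S : {set 'I_N}) (i : 'I_N) :
    pf_reach inc cost S -> i \in S -> inc i S < cost i ->
    pf_reach inc cost (S :\ i).

Definition pf_stable (R : rcfType) (N : nat)
  (inc : 'I_N -> {set 'I_N} -> R) (cost : 'I_N -> R) (S : {set 'I_N}) : Prop :=
  forall i, i \in S -> ~ (inc i S < cost i).

Definition pf_outcome (R : rcfType) (N : nat)
  (inc : 'I_N -> {set 'I_N} -> R) (cost : 'I_N -> R) (S : {set 'I_N}) : Prop :=
  pf_reach inc cost S /\ pf_stable inc cost S.

(* Main.v *)
Require Import Defs.
From HB Require Import structures.
From mathcomp Require Import all_boot all_order all_algebra.
From mathcomp Require Import ring lra.
Import Order.TTheory GRing.Theory Num.Theory.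
Set Implicit Arguments. Unset Strict Implicit. Unset Printing Implicit Defensive.
Local Open Scope ring_scope.

Definition dotv (R : realFieldType) n (u w : 'cV[R]_n) : R := \sum_i u i 0 * w i 0.

Lemma trmul_dot (R : realFieldType) n (u w : 'cV[R]_n) : (u^T *m w) 0 0 = dotv u w.
Proof. by rewrite mxE; apply: eq_bigr => i _; rewrite mxE. Qed.

Lemma dotC (R : realFieldType) n (u w : 'cV[R]_n) : dotv u w = dotv w u.
Proof. by apply: eq_bigr => i _; rewrite mulrC. Qed.

Lemma dot_ge0 (R : realFieldType) n (u : 'cV[R]_n) : 0 <= dotv u u.
Proof. by apply: sumr_ge0 => i _; rewrite -expr2 sqr_ge0. Qed.

Lemma dot_col (R : realFieldType) n1 n2 (a b : 'cV[R]_n1) (c e : 'cV[R]_n2) :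
  dotv (col_mx a c) (col_mx b e) = dotv a b + dotv c e.
Proof.
rewrite /dotv big_split_ord /=; congr (_ + _); apply: eq_bigr => i _.
  by rewrite !col_mxEu.
by rewrite !col_mxEd.
Qed.

Lemma dot_exp (R : realFieldType) n (u y : 'cV[R]_n) k :
  dotv (u - k *: y) (u - k *: y) = dotv u u - 2 * k * dotv u y + k ^+ 2 * dotv y y.
Proof.
rewrite /dotv !mulr_sumr -sumrN -!big_split /=; apply: eq_bigr => i _.
rewrite !mxE; ring.
Qed.

Lemma dot0r (R : realFieldType) n (u : 'cV[R]_n) : dotv u 0 = 0.
Proof. by rewrite /dotv big1 // => i _; rewrite mxE mulr0. Qed.

Definition pdl (R : realFieldType) n (lam : R) (M : 'M[R]_n) :=
  M^T = M /\ forall y : 'cV_n, lam * dotv y y <= dotv y (M *m y).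

Lemma sylvester (R : comUnitRingType) n (a : 'cV[R]_n) (b : 'rV[R]_n) :
  \det (1%:M + a *m b) = 1 + (b *m a) 0 0.
Proof.
pose X := block_mx (1%:M : 'M[R]_n) a (- b) (1%:M : 'M[R]_1).
have E1 : X = block_mx 1%:M 0 (- b) 1%:M *m block_mx 1%:M a 0 (1%:M + b *m a).
  rewrite mulmx_block ?mulmx1 ?mul1mx ?mulmx0 ?mul0mx ?addr0 ?add0r.
  by rewrite mulNmx addrCA addNr addr0.
have E2 : X = block_mx (1%:M + a *m b) a 0 1%:M *m block_mx 1%:M 0 (- b) 1%:M.
  rewrite mulmx_block ?mulmx1 ?mul1mx ?mulmx0 ?mul0mx ?addr0 ?add0r.
  by rewrite mulmxN addrK.
have := congr1 determinant E2; rewrite E1 !det_mulmx => H.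
rewrite !det_lblock !det_ublock !det1 !mul1r !mulr1 in H.
by rewrite -H det_mx11 !mxE.
Qed.

Lemma det_rank1 (R : realFieldType) n (M : 'M[R]_n) (u : 'cV[R]_n) :
  M \in unitmx -> \det (M + u *m u^T) = \det M * (1 + (u^T *m invmx M *m u) 0 0).
Proof.
move=> Mu.
have -> : M + u *m u^T = M *m (1%:M + (invmx M *m u) *m u^T).
  by rewrite mulmxDr mulmx1 !mulmxA mulmxV // mul1mx.
by rewrite det_mulmx sylvester mulmxA.
Qed.

Lemma rank1_q (R : realFieldType) n (lam : R) (M : 'M[R]_n) (u : 'cV[R]_n) :
  0 < lam -> pdl lam M -> M \in unitmx ->
  0 <= (u^T *m invmx M *m u) 0 0 /\ lam * (u^T *m invmx M *m u) 0 0 <= dotv u u.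
Proof.
move=> lam0 [_ Mpd] Mu.
set y := invmx M *m u.
have My : M *m y = u by rewrite /y mulmxA mulmxV // mul1mx.
have -> : (u^T *m invmx M *m u) 0 0 = dotv u y by rewrite -mulmxA trmul_dot.
have H := Mpd y; rewrite My dotC in H.
have H2 := dot_ge0 (u - lam *: y); rewrite dot_exp in H2.
have Y := dot_ge0 y.
split; first by nra.
nra.
Qed.

Lemma hadamard (R : realFieldType) n (lam : R) (M : 'M[R]_n) : 0 < lam -> pdl lam M ->
  lam ^+ n <= \det M /\ \det M <= \prod_i M i i.
Proof.
move=> lam0; elim: n M => [|n IH] M [Msym Mpd].
  by rewrite det_mx00 big_ord0 expr0.
pose N : 'M[R]_(1 + n) := M.
have Nsym : N^T = N := Msym.
have Npd : forall y : 'cV_(1 + n), lam * dotv y y <= dotv y (N *m y) := Mpd.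
change (lam ^+ n.+1 <= \det N /\ \det N <= \prod_(i < n.+1) M i i).
pose a := ulsubmx N; pose b := ursubmx N; pose c := dlsubmx N; pose C := drsubmx N.
have NE : N = block_mx a b c C by rewrite submxK.
have Cpd : pdl lam C.
  split; first by rewrite /C trmx_drsub Nsym.
  move=> y; have := Npd (col_mx 0 y).
  rewrite NE mul_block_col !mulmx0 !add0r !dot_col. rewrite (@dot0r R 1%N 0) [dotv 0 _]dotC (@dot0r R 1%N (b *m y)) !add0r; exact.
have [IH1 IH2] := IH C Cpd.
have Cu : C \in unitmx.
  by rewrite unitmxE unitfE lt0r_neq0 // (lt_le_trans (exprn_gt0 _ lam0) IH1).
pose w := invmx C *m c.
pose s := a - b *m w.
have Fact : N = block_mx 1%:M (b *m invmx C) 0 1%:M *m block_mx s 0 c C.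
  rewrite mulmx_block ?mulmx1 ?mul1mx ?mulmx0 ?mul0mx ?addr0 ?add0r.
  by rewrite NE /s /w mulmxA subrK -mulmxA mulVmx // mulmx1.
have detN : \det N = s 0 0 * \det C.
  by rewrite Fact det_mulmx det_ublock det_lblock !det1 !mul1r det_mx11.
have cE : c = C *m w by rewrite /w mulmxA mulmxV // mul1mx.
have sge : lam <= s 0 0.
  pose z : 'cV_(1 + n) := col_mx (1%:M : 'M_1) (- w).
  have Nz : N *m z = col_mx s 0.
    rewrite NE mul_block_col !mulmx1 !mulmxN {1}cE subrr //.
  have := Npd z; rewrite Nz /z !dot_col (@dot0r R n (- w)) addr0.
  rewrite /dotv !big_ord1 !mxE eqxx mulr1n !mul1r.
  have := dot_ge0 (- w); rewrite /dotv => W H.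
  apply: le_trans H; rewrite mulrDr mulr1 lerDl; apply: mulr_ge0 => //; exact: ltW.
have qge : 0 <= (b *m w) 0 0.
  have bE : b = c^T by rewrite /b /c trmx_dlsub Nsym.
  rewrite bE trmul_dot {1}cE dotC.
  apply: le_trans (proj2 Cpd w); apply: mulr_ge0; [exact: ltW | exact: dot_ge0].
have sE : s 0 0 = a 0 0 - (b *m w) 0 0 by rewrite /s !mxE.
split.
  by rewrite detN exprS; apply: ler_pM; [exact: ltW | apply: exprn_ge0; exact: ltW | exact: sge | exact: IH1].
rewrite big_ord_recl.
have -> : \prod_(i < n) M (lift ord0 i) (lift ord0 i) = \prod_(i < n) C i i.
  by apply: eq_bigr => i _; rewrite /C !mxE /N; f_equal; apply: val_inj.
have -> : M ord0 ord0 = a 0 0 by rewrite /a !mxE /N; f_equal; apply: val_inj.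
rewrite detN; apply: ler_pM.
- by apply: le_trans sge; exact: ltW.
- by apply: le_trans IH1; apply: exprn_ge0; exact: ltW.
- by rewrite sE lerBlDr lerDl.
- exact: IH2.
Qed.

Definition Mof (R : realFieldType) n T (lam : R) (v : 'I_T -> 'cV[R]_n) (A : {set 'I_T}) :
  'M[R]_n := lam%:M + \sum_(s in A) v s *m (v s)^T.

Lemma Mof_pd (R : realFieldType) n T (lam : R) (v : 'I_T -> 'cV[R]_n) A :
  0 <= lam -> pdl lam (Mof lam v A).
Proof.
move=> lam0; split.
  rewrite /Mof raddfD /= tr_scalar_mx linear_sum /=; congr (_ + _).
  by apply: eq_bigr => s _; rewrite trmx_mul trmxK.
move=> y; rewrite -[dotv y (_ *m y)]trmul_dot /Mof mulmxDl mul_scalar_mx mulmxDr.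
rewrite -scalemxAr mulmx_suml mulmx_sumr mxE summxE mxE trmul_dot lerDl.
apply: sumr_ge0 => s _.
rewrite -mulmxA mulmxA mxE big_ord1 !trmul_dot [dotv y _]dotC -expr2.
exact: sqr_ge0.
Qed.

Lemma Mof_det (R : realFieldType) n T (lam : R) (v : 'I_T -> 'cV[R]_n) A :
  0 < lam -> lam ^+ n <= \det (Mof lam v A) /\ \det (Mof lam v A) <= \prod_i (Mof lam v A) i i.
Proof. by move=> lam0; apply: hadamard => //; apply: Mof_pd; exact: ltW. Qed.

Lemma Mof_unit (R : realFieldType) n T (lam : R) (v : 'I_T -> 'cV[R]_n) A :
  0 < lam -> Mof lam v A \in unitmx.
Proof.
move=> lam0; have [H _] := Mof_det v A lam0.
by rewrite unitmxE unitfE lt0r_neq0 // (lt_le_trans (exprn_gt0 _ lam0) H).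
Qed.

Lemma Mof_U1 (R : realFieldType) n T (lam : R) (v : 'I_T -> 'cV[R]_n) (a : 'I_T) (A : {set 'I_T}) :
  a \notin A -> Mof lam v (a |: A) = Mof lam v A + v a *m (v a)^T.
Proof. by move=> aA; rewrite /Mof big_setU1 //= addrCA addrC. Qed.

Lemma bound1 (R : realFieldType) n T (lam K0 : R) (v : 'I_T -> 'cV[R]_n) :
  0 < lam -> (forall s, dotv (v s) (v s) <= K0) ->
  forall C A : {set 'I_T}, [disjoint A & C] ->
  \det (Mof lam v (A :|: C)) <= \det (Mof lam v A) * (1 + K0 / lam) ^+ #|C|.
Proof.
move=> lam0 HK.
suff H : forall k (C A : {set 'I_T}), #|C| = k -> [disjoint A & C] ->
  \det (Mof lam v (A :|: C)) <= \det (Mof lam v A) * (1 + K0 / lam) ^+ k.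
  by move=> C A; apply: H.
elim=> [|k IH] C A Ck dAC.
  by move/cards0_eq: Ck => ->; rewrite setU0 expr0 mulr1.
have [a aC] : exists a, a \in C.
  by apply/set0Pn; rewrite -card_gt0 Ck.
have Ck' : #|C :\ a| = k by move: Ck; rewrite (cardsD1 a C) aC add1n => -[].
have dAC' : [disjoint A & C :\ a].
  by apply: (disjointWr _ dAC); apply: subD1set.
have aN : a \notin A :|: C :\ a.
  rewrite !inE eqxx /= orbF; apply/negP => aA.
  by rewrite (disjointFl dAC aC) in aA.
have -> : A :|: C = a |: (A :|: C :\ a) by rewrite setUCA setD1K.
rewrite Mof_U1 // det_rank1; last exact: Mof_unit.
have [q0 qle] := rank1_q (v a) lam0 (Mof_pd v (A :|: C :\ a) (ltW lam0)) (Mof_unit v _ lam0).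
have [D0 _] := Mof_det v (A :|: C :\ a) lam0.
have D0' : 0 <= \det (Mof lam v (A :|: C :\ a)).
  by apply: le_trans D0; apply: exprn_ge0; exact: ltW.
apply: le_trans (_ : \det (Mof lam v (A :|: C :\ a)) * (1 + K0 / lam) <= _).
  apply: ler_wpM2l => //; rewrite lerD2l ler_pdivlMr // mulrC.
  exact: le_trans qle (HK a).
rewrite exprS mulrA [_ * (1 + _)]mulrC -mulrA.
rewrite [X in _ <= X]mulrA [_ * (1 + _)]mulrC -mulrA.
have K1 : 0 <= 1 + K0 / lam.
  have := HK a; have := dot_ge0 (v a) => h1 h2.
  by rewrite addr_ge0 // divr_ge0 ?(le_trans h1 h2) // ltW.
by apply: ler_wpM2l => //; apply: IH.
Qed.

Lemma bound2 (R : realFieldType) n T (lam K0 : R) (v : 'I_T -> 'cV[R]_n) (U : {set 'I_T}) :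
  0 < lam -> 0 <= K0 -> (forall s, dotv (v s) (v s) <= K0) ->
  \det (Mof lam v U) <= lam ^+ n * (1 + T%:R * K0 / (lam * n%:R)) ^+ n.
Proof.
move=> lam0 K00 HK.
have [_ H] := Mof_det v U lam0.
apply: le_trans H _.
have diag : forall i, Mof lam v U i i = lam + \sum_(s in U) v s i 0 * v s i 0.
  move=> i; rewrite /Mof !mxE eqxx mulr1n summxE; congr (_ + _).
  by apply: eq_bigr => s _; rewrite !mxE big_ord1 !mxE.
have dge : {in predT, forall i, 0 <= Mof lam v U i i}.
  move=> i _; rewrite diag; apply: addr_ge0; first exact: ltW.
  by apply: sumr_ge0 => s _; rewrite -expr2 sqr_ge0.
case: (leif_AGM dge) => H1 _.
apply: le_trans H1 _.
have -> : #|@predT 'I_n| = n := card_ord n.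
have Hsum : \sum_(i in predT) Mof lam v U i i <= n%:R * lam + T%:R * K0.
  under eq_bigr => i _ do rewrite diag.
  rewrite big_split /= sumr_const.
  have -> : #|@predT 'I_n| = n := card_ord n.
  rewrite mulr_natl lerD2l exchange_big /=.
  apply: le_trans (_ : \sum_(s in U) K0 <= _).
    by apply: ler_sum => s _; exact: HK.
  rewrite sumr_const -[K0 *+ _]mulr_natl ler_wpM2r // ler_nat.
  by apply: leq_trans (max_card _) _; rewrite card_ord.
have S0 : 0 <= \sum_(i in predT) Mof lam v U i i.
  by apply: sumr_ge0 => i _; exact: dge.
move: (\sum_(i in predT) Mof lam v U i i) Hsum S0 => S Hsum S0.
case: (posnP n) => [n0|npos].
  by rewrite n0 !expr0 mulr1.
have nR : 0 < n%:R :> R by rewrite ltr0n.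
rewrite -exprMn; apply: lerXn2r.
- by rewrite nnegrE; apply: divr_ge0 => //; exact: ltW.
- rewrite nnegrE; apply: mulr_ge0; first exact: ltW.
  apply: addr_ge0 => //; apply: divr_ge0; first by apply: mulr_ge0.
  by apply: mulr_ge0; [exact: ltW | exact: ltW].
rewrite ler_pdivrMr //; apply: le_trans Hsum _.
rewrite le_eqVlt; apply/orP; left; apply/eqP.
field; apply/andP; split; apply: lt0r_neq0 => //.
Qed.


Lemma disj0l (T : finType) (B : {set T}) : [disjoint set0 & B].
Proof. by rewrite -setI_eq0 set0I. Qed.

Lemma disj0r (T : finType) (B : {set T}) : [disjoint B & set0].
Proof. by rewrite -setI_eq0 setI0. Qed.

Lemma disjU (T : finType) (A B C : {set T}) :
  [disjoint A & B] -> [disjoint A & C] -> [disjoint A & B :|: C].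
Proof. by rewrite -!setI_eq0 setIUr => /eqP -> /eqP ->; rewrite setU0. Qed.

Lemma gram_setU (R : rcfType) d T (x : 'I_T -> 'cV[R]_d) (A B : {set 'I_T}) :
  [disjoint A & B] -> gram x (A :|: B) = gram x A + gram x B.
Proof.
by move=> dAB; rewrite /gram -bigU //; apply: eq_bigl => s; rewrite !inE.
Qed.

Theorem mainTheorem2 (R : rcfType) (d T N : nat)
  (x : 'I_T -> 'cV[R]_d) (L lam : R)
  (avail local server : 'I_N -> nat -> {set 'I_T}) :
  (forall s : 'I_T, norm2 (x s) <= L) ->
  0 < lam ->
  (forall t : nat, (t <= T)%N -> data_wf avail local server t) ->
  let bound := Num.min ((1 + L ^+ 2 / lam) ^+ T)
                       ((1 + T%:R * L ^+ 2 / (lam * d%:R)) ^+ d) in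
  (forall (t : nat), (t <= T)%N -> forall (i : 'I_N) (S : {set 'I_N}),
     data_incentive x lam avail local server i t S <= bound)
  /\
  (forall (t : nat), (t <= T)%N -> forall (cost : 'I_N -> R) (i : 'I_N),
     bound < cost i ->
     forall S : {set 'I_N},
       pf_outcome (fun j S' => data_incentive x lam avail local server j t S')
                  cost S ->
       i \notin S).
Proof.
move=> Hx lam0 Hwf bound.
have HK : forall s, dotv (x s) (x s) <= L ^+ 2.
  move=> s; have := Hx s; rewrite /norm2 => H.
  have S0 : 0 <= \sum_(k < d) x s k 0 ^+ 2.
    by apply: sumr_ge0 => k _; exact: sqr_ge0.
  have -> : dotv (x s) (x s) = Num.sqrt (\sum_(k < d) x s k 0 ^+ 2) ^+ 2.
    by rewrite sqr_sqrtr //; apply: eq_bigr => k _; rewrite expr2.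
  by rewrite !expr2; apply: ler_pM => //; exact: sqrtr_ge0.
have part1 : forall t, (t <= T)%N -> forall i S,
    data_incentive x lam avail local server i t S <= bound.
  move=> t tT i S.
  have [_ [dAS dAL dLL]] := Hwf t tT i.
  pose A := avail i t.
  pose F j := if (j \in S) && (j != i) then local j t else set0.
  pose U' := server i t :|: \bigcup_j F j.
  have dF : forall j k, j != k -> [disjoint F j & F k].
    move=> j k jk; rewrite /F.
    case: ifP => [/andP [_ ji]|_]; last exact: disj0l.
    case: ifP => [/andP [_ ki]|_]; last exact: disj0r.
    exact: dLL.
  have gF : gram x (\bigcup_j F j) = \sum_(j in S | j != i) gram x (local j t).
    rewrite /gram partition_disjoint_bigcup // [RHS]big_mkcond /=.
    apply: eq_bigr => j _; rewrite /F; case: ifP => // _.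
    by rewrite big_set0.
  have dSF : [disjoint server i t & \bigcup_j F j].
    apply: bigcup_disjoint => j _; rewrite /F.
    case: ifP => [/andP [_ ji]|_]; last exact: disj0r.
    exact: (proj2 (dAL j ji)).
  have dAU : [disjoint A & U'].
    apply: disjU => //; apply: bigcup_disjoint => j _; rewrite /F.
    case: ifP => [/andP [_ ji]|_]; last exact: disj0r.
    exact: (proj1 (dAL j ji)).
  have DV : Dmat x local server i t S + Vmat x lam avail i t = Mof lam x (A :|: U').
    change (Dmat x local server i t S + (lam%:M + gram x A) = lam%:M + gram x (A :|: U')).
    rewrite gram_setU // /U' gram_setU // gF /Dmat.
    rewrite [LHS]addrC [RHS]addrA; congr (_ + _); exact: addrC.
  have VE : Vmat x lam avail i t = Mof lam x A := erefl.
  rewrite /data_incentive DV VE.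
  have [detA _] := Mof_det x A lam0.
  have dA0 : 0 < \det (Mof lam x A) by apply: lt_le_trans detA; exact: exprn_gt0.
  suff Hr : \det (Mof lam x (A :|: U')) / \det (Mof lam x A) <= bound by lra.
  rewrite /bound le_min; apply/andP; split; rewrite ler_pdivrMr // mulrC.
    apply: le_trans (bound1 lam0 HK dAU) _.
    apply: ler_wpM2l; first exact: ltW.
    apply: ler_weXn2l.
      by rewrite lerDl; apply: divr_ge0; [exact: sqr_ge0 | exact: ltW].
    by apply: leq_trans (max_card _) _; rewrite card_ord.
  apply: le_trans (bound2 (A :|: U') lam0 (sqr_ge0 L) HK) _.
  apply: ler_wpM2r => //; apply: exprn_ge0; apply: addr_ge0 => //.
  apply: divr_ge0; first by apply: mulr_ge0; [exact: ler0n | exact: sqr_ge0].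
  by apply: mulr_ge0; [exact: ltW | exact: ler0n].
split => //.
move=> t tT cost i Hb S [_ Hst]; apply/negP => iS.
by apply: (Hst i iS); apply: le_lt_trans (part1 t tT i S) Hb.
Qed.
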